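(* Let $n\ge2$, $k\ge1$, and let $\mathbf x\neq\mathbf y$ be vertices of $H_{n,k}$ whose longest common prefix has length $i$ (so $0\le i\le k-1$, i.e. $x_j=y_j$ for $j\le i$ and $x_{i+1}\ne y_{i+1}$). Then the distance between $\mathbf x$ and $\mathbf y$ in $H_{n,k}$ is at most $2(k-i)-1$.
   Context: Let $n\ge 2$ and $k\ge 1$ be integers. $H_{n,k}$ is the simple undirected graph with vertex set $V_{n,k}=\mathbb{Z}_n^k$ (so $|V_{n,k}|=n^k$), whose vertices are written as strings $x_1x_2\ldots x_k$ with $x_j\in\mathbb{Z}_n=\{0,1,\ldots,n-1\}$. Two distinct vertices are adjacent if and only if they are related by one of the following rules. For $i=0$ the prefix $x_1\ldots x_i$ is empty, and ''$0\ldots0$'' denotes a string of zeros completing the word to length $k$. (R1) $x_1\ldots x_{k-1}x_k\sim x_1\ldots x_{k-1}y_k$ whenever $y_k\neq x_k$. (R2) For $0\le i\le k-2$: $x_1\ldots x_i0\ldots0\sim x_1\ldots x_ix_{i+1}\ldots x_k$ whenever $x_j\neq 0$ for all $i+1\le j\le k$. (R3) For $1\le i\le k-1$: $x_1\ldots x_{i-1}x_i0\ldots0\sim x_1\ldots x_{i-1}y_i0\ldots0$ whenever $x_i,y_i\neq0$ and $x_i\ne y_i$. In particular, $H_{n,1}$ is the complete graph $K_n$. *)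

(* Defs.v *)
From mathcomp Require Import all_boot.
Set Implicit Arguments. Unset Strict Implicit. Unset Printing Implicit Defensive.

(* Vertices of H_{n,k}: words x_1 ... x_k over Z_n, represented as k-tuples of
   'I_n.  Positions are 0-based: tnth x j (j : 'I_k) is the letter x_{j+1}. *)
Definition vtx (n k : nat) := (k.-tuple 'I_n).

Definition letter n k (x : vtx n k) (j : nat) : nat :=
  nth 0 (map val (val x)) j.

Definition agree_upto n k (x y : vtx n k) (m : nat) : bool :=
  [forall j : 'I_k, (j < m) ==> (tnth x j == tnth y j)].

Definition R1 n k (x y : vtx n k) : bool :=
  agree_upto x y k.-1 && (letter x k.-1 != letter y k.-1).

(* (R2) for 0 <= i <= k-2 : x_1..x_i 0..0  ~  x_1..x_i x_{i+1}..x_k with all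
   x_{i+1},...,x_k nonzero.  Here a is the zero-padded word. *)
Definition R2dir n k (a b : vtx n k) : bool :=
  [exists i : 'I_k, (i <= k - 2) &&
     [&& agree_upto a b i,
         [forall j : 'I_k, (i <= j) ==> (val (tnth a j) == 0)] &
         [forall j : 'I_k, (i <= j) ==> (val (tnth b j) != 0)]]].

(* (R3) for 1 <= i <= k-1 : x_1..x_{i-1} x_i 0..0 ~ x_1..x_{i-1} y_i 0..0
   with x_i, y_i nonzero and distinct.  In 0-based terms, p = i-1 is the
   position of the differing letter, with 0 <= p <= k-2. *)
Definition R3 n k (x y : vtx n k) : bool :=
  [exists p : 'I_k, (p <= k - 2) &&
     [&& agree_upto x y p,
         [forall j : 'I_k, (p < j) ==>
            ((val (tnth x j) == 0) && (val (tnth y j) == 0))],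
         val (tnth x p) != 0, val (tnth y p) != 0 &
         tnth x p != tnth y p]].

Definition Hadj n k : rel (vtx n k) :=
  fun x y => (x != y) &&
    [|| R1 x y, R2dir x y, R2dir y x | R3 x y].

Definition common_prefix_len n k (x y : vtx n k) (i : nat) : Prop :=
  i < k /\ agree_upto x y i /\ letter x i != letter y i.

Definition dist_le n k (x y : vtx n k) (d : nat) : Prop :=
  exists p : seq (vtx n k), [/\ path (@Hadj n k) x p, last x p = y & size p <= d].

(* Main.v *)
Require Import Defs.
From mathcomp Require Import all_boot.
From mathcomp Require Import zify.
Set Implicit Arguments. Unset Strict Implicit. Unset Printing Implicit Defensive.

Section S.
Variables n k : nat.
Local Notation V := (vtx n k).

Lemma agreeP (x y : V) m :
  reflect (forall j : 'I_k, j < m -> tnth x j = tnth y j) (agree_upto x y m).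
Proof.
apply: (iffP forallP) => H j.
- by move=> hj; move: (H j); rewrite hj => /eqP.
- by apply/implyP => hj; rewrite H.
Qed.

Lemma agree_sym (x y : V) m : agree_upto x y m -> agree_upto y x m.
Proof. by move/agreeP=> H; apply/agreeP=> j hj; rewrite H. Qed.

Lemma agree_le (x y : V) m m' : m' <= m -> agree_upto x y m -> agree_upto x y m'.
Proof. move=> le /agreeP H; apply/agreeP=> j hj; apply: H; lia. Qed.

Lemma letterE (x : V) (j : 'I_k) : letter x j = val (tnth x j).
Proof.
rewrite /letter (nth_map (tnth x j)); last by rewrite size_tuple.
by rewrite -(tnth_nth (tnth x j)).
Qed.

Lemma R1_sym (x y : V) : R1 x y -> R1 y x.
Proof. by case/andP=> /agree_sym a b; rewrite /R1 a eq_sym b. Qed.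

Lemma R3_sym (x y : V) : R3 x y -> R3 y x.
Proof.
case/existsP=> p /andP[hp /and5P[a b c d e]].
apply/existsP; exists p; apply/andP; split=> //; apply/and5P; split=> //.
- exact: agree_sym.
- apply/forallP=> j; move/forallP: b => /(_ j); by rewrite andbC.
- by rewrite eq_sym.
Qed.

Lemma Hadj_sym (x y : V) : Hadj x y -> Hadj y x.
Proof.
case/andP=> ne /or4P [h|h|h|h]; apply/andP; split; rewrite 1?eq_sym //;
  apply/or4P.
- by constructor 1; apply: R1_sym.
- by constructor 3.
- by constructor 2.
- by constructor 4; apply: R3_sym.
Qed.

Definition fill m (x : V) (c : 'I_n) : V :=
  [tuple (if j < m then tnth x j else c) | j < k].

Lemma tnth_fill m x c j : tnth (fill m x c) j = if j < m then tnth x j else c.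
Proof. by rewrite tnth_mktuple. Qed.

Lemma edge_zn (a b : V) (m : 'I_k) : agree_upto a b m ->
  (forall j : 'I_k, m <= j -> val (tnth a j) = 0) ->
  (forall j : 'I_k, m <= j -> val (tnth b j) != 0) -> Hadj a b.
Proof.
move=> ag za nb.
have ne : a != b.
  by apply/eqP=> eab; move: (nb m (leqnn _)); rewrite -eab za.
apply/andP; split => //; apply/or4P.
case: (leqP m (k-2)) => hm.
- constructor 2; apply/existsP; exists m; rewrite hm ag /=.
  apply/andP; split; apply/forallP=> j; apply/implyP=> hj.
  + by rewrite za.
  + exact: nb.
- constructor 1; rewrite /R1.
  have -> : k.-1 = m by move: (ltn_ord m); lia.
  by rewrite ag !letterE za // eq_sym nb.
Qed.

Lemma dist_refl (x : V) : dist_le x x 0.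
Proof. by exists [::]. Qed.
Lemma dist_edge (x y : V) : Hadj x y -> dist_le x y 1.
Proof. by move=> h; exists [:: y]; rewrite /= h. Qed.
Lemma dist_trans (x y z : V) a b :
  dist_le x y a -> dist_le y z b -> dist_le x z (a + b).
Proof.
case=> p [p1 l1 s1] [q [q1 l2 s2]]; exists (p ++ q); split.
- by rewrite cat_path p1 l1 q1.
- by rewrite last_cat l1.
- by rewrite size_cat leq_add.
Qed.
Lemma dist_mono (x y : V) a b : a <= b -> dist_le x y a -> dist_le x y b.
Proof. move=> le [p [h1 h2 h3]]; exists p; split => //; exact: leq_trans h3 le. Qed.
Lemma dist_sym (x y : V) a : dist_le x y a -> dist_le y x a.
Proof.
case=> p [hp <- hs]; refine (dist_mono hs _); clear hs.
elim: p x hp => [|z p IH] x /=; first by move=> _; exact: dist_refl.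
case/andP=> hxz hp.
have := dist_trans (IH _ hp) (dist_edge (Hadj_sym hxz)).
by rewrite addn1.
Qed.

Variables (z0 z1 : 'I_n) (hz0 : val z0 = 0) (hz1 : val z1 != 0).

Lemma AB (d p : nat) (Hp : p < k) (x : V) : k.-1 - p = d ->
  dist_le x (fill p.+1 x z0) (k.-1 - p) /\
  (val (tnth x (Ordinal Hp)) != 0 -> exists z : V, [/\ agree_upto x z p.+1,
      (forall j : 'I_k, p <= j -> val (tnth z j) != 0) & dist_le x z (k.-1 - p)]).
Proof.
elim: d p Hp x => [|d IH] p Hp x hd.
- have hp : p = k.-1 by lia.
  have fx : fill p.+1 x z0 = x.
    apply: eq_from_tnth => j; rewrite tnth_fill.
    by have -> : j < p.+1 by move: (ltn_ord j); lia.
  split; first by rewrite fx hd; exact: dist_refl.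
  move=> hx; exists x; split.
  + by apply/agreeP.
  + move=> j hj; have -> : j = Ordinal Hp by apply: val_inj => /=; move: (ltn_ord j); lia.
    done.
  + by rewrite hd; exact: dist_refl.
- have Hq : p.+1 < k by lia.
  have hd' : k.-1 - p.+1 = d by lia.
  have [IHA IHB] := IH p.+1 Hq x hd'.
  case hxq: (val (tnth x (Ordinal Hq)) == 0).
  + have ef : fill p.+2 x z0 = fill p.+1 x z0.
      apply: eq_from_tnth => j; rewrite !tnth_fill.
      case: (ltnP j p.+1) => hj; first by have -> : j < p.+2 by lia.
      case hj2: (j < p.+2) => //.
      have -> : j = Ordinal Hq by apply: val_inj => /=; lia.
      by apply: val_inj; rewrite hz0; exact/eqP.
    rewrite ef in IHA.
    split; first by apply: dist_mono IHA; lia.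
    move=> hxp.
    have E : Hadj (fill p.+1 x z0) (fill p.+1 x z1).
      apply: (@edge_zn _ _ (Ordinal Hq)) => /=.
      * by apply/agreeP => j hj; rewrite !tnth_fill hj.
      * by move=> j hj; rewrite tnth_fill ltnNge hj /=.
      * by move=> j hj; rewrite tnth_fill ltnNge hj /=.
    exists (fill p.+1 x z1); split.
    * by apply/agreeP => j hj; rewrite tnth_fill hj.
    * move=> j hj; rewrite tnth_fill; case: ifP => hj2 //.
      have -> : j = Ordinal Hp by apply: val_inj => /=; lia.
      done.
    * have := dist_trans IHA (dist_edge E); apply: dist_mono; lia.
  + have [z [ag nz dz]] := IHB (negbT hxq).
    move/agreeP: (ag) => agv.
    split.
    * have ef : fill p.+1 x z0 = fill p.+1 z z0.
        apply: eq_from_tnth => j; rewrite !tnth_fill.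
        case: ifP => // hj; apply: agv; lia.
      have E : Hadj (fill p.+1 z z0) z.
        apply: (@edge_zn _ _ (Ordinal Hq)) => /=.
        - by apply/agreeP => j hj; rewrite !tnth_fill hj.
        - by move=> j hj; rewrite tnth_fill ltnNge hj /=.
        - exact: nz.
      rewrite ef; have := dist_trans dz (dist_edge (Hadj_sym E)).
      apply: dist_mono; lia.
    * move=> hxp; exists z; split.
      - by apply: agree_le ag.
      - move=> j hj; case: (eqVneq (val j) p) => ej.
          have -> : j = Ordinal Hp by apply: val_inj.
          by rewrite -agv //=; lia.
        by apply: nz; rewrite ltn_neqAle hj andbT eq_sym.
      - by apply: dist_mono dz; lia.
Qed.

Lemma case0 (x y : V) (I : 'I_k) : agree_upto x y I -> val (tnth x I) = 0 ->
  val (tnth y I) != 0 -> dist_le x y (2 * (k - I) - 1).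
Proof.
move=> ag hx hy.
have eI : Ordinal (ltn_ord I) = I by apply: val_inj.
have [dA _] := AB (ltn_ord I) x (erefl _).
have [_ hB] := AB (ltn_ord I) y (erefl _).
have [z [agz nz dz]] := hB (eq_ind_r (fun t => val (tnth y t) != 0) hy eI).
have ef : fill I.+1 x z0 = fill I x z0.
  apply: eq_from_tnth => j; rewrite !tnth_fill.
  case: (ltnP j I) => hj; first by have -> : j < I.+1 by lia.
  case hj2: (j < I.+1) => //.
  have -> : j = I by apply: val_inj => /=; lia.
  by apply: val_inj; rewrite hz0 hx.
rewrite ef in dA.
move/agreeP: ag => agv; move/agreeP: agz => agzv.
have E : Hadj (fill I x z0) z.
  apply: (@edge_zn _ _ I).
  - apply/agreeP => j hj; rewrite tnth_fill hj agv // agzv //; lia.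
  - by move=> j hj; rewrite tnth_fill ltnNge hj /=.
  - exact: nz.
have := dist_trans (dist_trans dA (dist_edge E)) (dist_sym dz).
apply: dist_mono; move: (ltn_ord I); lia.
Qed.

Lemma case1 (x y : V) (I : 'I_k) : I < k.-1 -> agree_upto x y I ->
  val (tnth x I) != 0 -> val (tnth y I) != 0 -> val (tnth x I) != val (tnth y I) ->
  dist_le x y (2 * (k - I) - 1).
Proof.
move=> hI ag hx hy hxy.
have [dA _] := AB (ltn_ord I) x (erefl _).
have [dB _] := AB (ltn_ord I) y (erefl _).
move/agreeP: ag => agv.
have E : Hadj (fill I.+1 x z0) (fill I.+1 y z0).
  have ne : tnth x I != tnth y I by apply: contra hxy => /eqP ->.
  apply/andP; split.
    apply/eqP => e; move: (congr1 (fun t => tnth t I) e).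
    by rewrite !tnth_fill ltnSn; apply/eqP.
  apply/or4P; constructor 4.
  apply/existsP; exists I; apply/andP; split; first by lia.
  apply/and5P; split.
  - by apply/agreeP => j hj; rewrite !tnth_fill ltnS (ltnW hj) agv.
  - apply/forallP => j; apply/implyP => hj.
    by rewrite !tnth_fill ltnNge hj /= hz0.
  - by rewrite tnth_fill ltnSn.
  - by rewrite tnth_fill ltnSn.
  - by rewrite !tnth_fill ltnSn.
have := dist_trans (dist_trans dA (dist_edge E)) (dist_sym dB).
apply: dist_mono; move: (ltn_ord I); lia.
Qed.

End S.

Theorem mainTheorem8 (n k : nat) (x y : vtx n k) (i : nat) :
  2 <= n -> 1 <= k -> x != y -> common_prefix_len x y i ->
  dist_le x y (2 * (k - i) - 1).
Proof.
move=> hn hk nxy [hi [ag hl]].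
pose z0 := @Ordinal n 0 (ltnW hn).
pose z1 := @Ordinal n 1 hn.
pose I := Ordinal hi.
have hxy : val (tnth x I) != val (tnth y I) by rewrite -!letterE; exact hl.
case: (eqVneq i k.-1) => [ei | nei].
  apply: (@dist_mono _ _ _ _ 1); first lia.
  apply: dist_edge; apply/andP; split => //; apply/or4P; constructor 1.
  by rewrite /R1 -ei ag hl.
have hI : I < k.-1 by rewrite /=; lia.
case hx0: (val (tnth x I) == 0).
  have hy : val (tnth y I) != 0 by move/eqP: hx0 => h; rewrite -h eq_sym.
  exact: (@case0 n k z0 z1 (erefl _) (erefl _) x y I ag (eqP hx0) hy).
case hy0: (val (tnth y I) == 0).
  apply: dist_sym.
  have hx : val (tnth x I) != 0 by rewrite hx0.
  exact: (@case0 n k z0 z1 (erefl _) (erefl _) y x I (agree_sym ag) (eqP hy0) hx).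
exact: (@case1 n k z0 z1 (erefl _) (erefl _) x y I hI ag (negbT hx0) (negbT hy0) hxy).
Qed.
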